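(* Let $X,Y$ be real Hilbert spaces, let $A\in\mathcal{L}(X,Y)$ be a compact operator with singular system $\{(\sigma_i,u_i,v_i)\}_i$, and let $\alpha>0$. Let $B_\alpha=\sum_i\beta_i^\alpha v_iu_i^*$ with $\beta_i^\alpha=\frac{\sigma_i}{2}+\sqrt{\frac{\sigma_i^2}{4}-\alpha}$ if $\sigma_i\ge 2\sqrt\alpha$ and $\beta_i^\alpha=\sqrt\alpha$ if $\sigma_i<2\sqrt\alpha$, and define $K_\alpha:Y\to X$ by $$K_\alpha(y)=x(B_\alpha,y)=(B_\alpha^*B_\alpha+\alpha I)^{-1}B_\alpha^*y .$$ Then $K_\alpha(y)=\sum_i \frac{F_\alpha(\sigma_i)}{\sigma_i}\langle y,v_i\rangle\,u_i$ for all $y\in Y$, where $$F_\alpha(\sigma)=\begin{cases}1, & \sigma\ge 2\sqrt\alpha,\\ \frac{\sigma}{2\sqrt\alpha}, & \sigma<2\sqrt\alpha,\end{cases}$$ and $(K_\alpha)_{\alpha>0}$ is an order optimal regularization method with filter $F_\alpha$: for every $\nu>0$ there exist constants $\gamma,c_1,c_2,c_3>0$ (independent of $\alpha$) such that for all $\alpha>0$: (1) $\sup_{\sigma>0}|F_\alpha(\sigma)\sigma^{-1}|\le c_1\alpha^{-\gamma}$; (2) $\sup_{\sigma>0}|1-F_\alpha(\sigma)|\sigma^{\nu}<c_2\alpha^{\gamma\nu}$; (3) $|F_\alpha(\sigma)|\le c_3$ for all $\sigma>0$.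
   Context: A singular system of the compact operator $A$ means: $\sigma_i>0$, $\{u_i\}$ orthonormal in $X$, $\{v_i\}$ orthonormal in $Y$, $Au_i=\sigma_i v_i$, $A^*v_i=\sigma_i u_i$, $A=\sum_i\sigma_iv_iu_i^*$. For $v\in Y,u\in X$, $vu^*$ denotes the map $x\mapsto\langle u,x\rangle v$. $x(B,y)$ is the unique minimizer of $\tfrac12\|Bx-y\|^2+\tfrac\alpha2\|x\|^2$. The conditions (1)–(3) are the paper's (standard filter-based) definition of an order optimal regularization filter for source exponent $\nu$. *)

(* Defs.v *)
From HB Require Import structures.
From mathcomp Require Import all_boot all_order all_algebra finmap.
From mathcomp Require Import all_classical all_reals all_analysis.
Set Implicit Arguments. Unset Strict Implicit. Unset Printing Implicit Defensive.
Import Order.TTheory GRing.Theory Num.Theory.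
Import numFieldNormedType.Exports.
Local Open Scope classical_set_scope.
Local Open Scope ring_scope.

(* A real inner product on a normed space V whose induced norm is the norm
   of V.  A real Hilbert space is a complete normed space (completeNormedModType)
   equipped with such an inner product. *)
Definition inner_product {R : realType} {V : normedModType R}
    (ip : V -> V -> R) : Prop :=
  [/\ (forall x y, ip x y = ip y x),
      (forall a x y z, ip (a *: x + y) z = a * ip x z + ip y z)
    & (forall x, ip x x = `|x| ^+ 2)].

(* Unconditional convergence of a family indexed by an arbitrary (choice)
   type I: the net of finite partial sums converges to s. *)
Definition has_usum {R : realType} {V : normedModType R} {I : choiceType}
    (f : I -> V) (s : V) : Prop :=
  forall e : R, 0 < e -> exists A : {fset I},
    forall F : {fset I}, fsubset A F -> `|s - \sum_(i <- F) f i| < e.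

Definition orthonormal {R : realType} {V : normedModType R} {I : choiceType}
    (ip : V -> V -> R) (w : I -> V) : Prop :=
  forall i j, ip (w i) (w j) = if i == j then 1 else 0.

Definition compact_op {R : realType} {X Y : normedModType R} (A : X -> Y) : Prop :=
  compact (closure [set A x | x in ball (0 : X) 1]).

(* A^* v_i = sigma_i u_i is written via the defining identity of the adjoint:
   <A^* v_i, x> = <v_i, A x>.  A = sum_i sigma_i v_i (u_i)^* is read pointwise
   (unconditional convergence for every x), where the rank-one map v u^T applied to x is <u, x> v. *)
Definition singular_system {R : realType} {X Y : normedModType R} {I : choiceType}
    (ipX : X -> X -> R) (ipY : Y -> Y -> R) (A : X -> Y)
    (sigma : I -> R) (u : I -> X) (v : I -> Y) : Prop :=
  [/\ (forall i, 0 < sigma i),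
      orthonormal ipX u /\ orthonormal ipY v,
      (forall i, A (u i) = sigma i *: v i),
      (forall i x, ipY (v i) (A x) = sigma i * ipX (u i) x)
    & (forall x, has_usum (fun i => (sigma i * ipX (u i) x) *: v i) (A x))].

Definition beta_coef {R : realType} (alpha s : R) : R :=
  if 2 * Num.sqrt alpha <= s then s / 2 + Num.sqrt (s ^+ 2 / 4 - alpha)
  else Num.sqrt alpha.

Definition filterF {R : realType} (alpha s : R) : R :=
  if 2 * Num.sqrt alpha <= s then 1 else s / (2 * Num.sqrt alpha).

Definition tikhonov {R : realType} {X Y : normedModType R}
    (B : X -> Y) (alpha : R) (y : Y) (x : X) : R :=
  2^-1 * `|B x - y| ^+ 2 + alpha / 2 * `|x| ^+ 2.

(* x is the unique minimizer of the Tikhonov functional, i.e. x = x(B, y). *)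
Definition is_tikhonov_solution {R : realType} {X Y : normedModType R}
    (B : X -> Y) (alpha : R) (y : Y) (x : X) : Prop :=
  (forall z, tikhonov B alpha y x <= tikhonov B alpha y z) /\
  (forall z, (forall w, tikhonov B alpha y z <= tikhonov B alpha y w) -> z = x).

(* Main.v *)
Require Import Defs.
From HB Require Import structures.
From mathcomp Require Import all_boot all_order all_algebra finmap.
From mathcomp Require Import all_classical all_reals all_analysis.
From mathcomp Require Import lra ring.
Import Order.TTheory GRing.Theory Num.Theory.
Import numFieldNormedType.Exports.
Local Open Scope classical_set_scope.
Local Open Scope ring_scope.


Lemma ipDl {R : realType} {V : normedModType R} {ip : V -> V -> R} :
  inner_product ip -> forall x y z, ip (x + y) z = ip x z + ip y z.
Proof. by case=> _ L _ x y z; rewrite -[x in LHS]scale1r L mul1r. Qed.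

Lemma ipZl {R : realType} {V : normedModType R} {ip : V -> V -> R} :
  inner_product ip -> forall a x z, ip (a *: x) z = a * ip x z.
Proof.
move=> h a x z; have := ipDl h 0 0 z; rewrite addr0 => /eqP.
rewrite -subr_eq subrr eq_sym => /eqP ip0.
by case: h => _ L _; rewrite -[a *: x]addr0 L ip0 addr0.
Qed.

Lemma ipBl {R : realType} {V : normedModType R} {ip : V -> V -> R} :
  inner_product ip -> forall x y z, ip (x - y) z = ip x z - ip y z.
Proof.
move=> h x y z; rewrite ipDl // -scaleN1r ipZl //; lra.
Qed.

Lemma ipDr {R : realType} {V : normedModType R} {ip : V -> V -> R} :
  inner_product ip -> forall x y z, ip z (x + y) = ip z x + ip z y.
Proof. move=> h x y z; case: (h) => S _ _; by rewrite !(S z) ipDl. Qed.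

Lemma ipZr {R : realType} {V : normedModType R} {ip : V -> V -> R} :
  inner_product ip -> forall a x z, ip z (a *: x) = a * ip z x.
Proof. move=> h a x z; case: (h) => S _ _; by rewrite !(S z) ipZl. Qed.

Lemma ipBr {R : realType} {V : normedModType R} {ip : V -> V -> R} :
  inner_product ip -> forall x y z, ip z (x - y) = ip z x - ip z y.
Proof. move=> h x y z; case: (h) => S _ _; by rewrite !(S z) ipBl. Qed.

Lemma ipNN {R : realType} {V : normedModType R} {ip : V -> V -> R} :
  inner_product ip -> forall x, ip x x = `|x| ^+ 2.
Proof. by case. Qed.

Lemma ip0l {R : realType} {V : normedModType R} {ip : V -> V -> R} :
  inner_product ip -> forall z, ip 0 z = 0.
Proof. by move=> h z; rewrite -(scale0r (0:V)) ipZl // mul0r. Qed.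



Lemma ip_quad {R : realType} {V : normedModType R} {ip : V -> V -> R} :
  inner_product ip -> forall (t : R) (x y : V),
  0 <= t ^+ 2 * `|x| ^+ 2 - 2 * t * ip x y + `|y| ^+ 2.
Proof.
move=> h t x y.
have := ipNN h (t *: x - y).
rewrite (ipBl h) !(ipBr h) !(ipZl h) !(ipZr h) !(ipNN h).
case: (h) => S _ _; rewrite (S y x) => E.
have -> : t ^+ 2 * `|x| ^+ 2 - 2 * t * ip x y + `|y| ^+ 2 = 
   t * (t * `|x| ^+ 2) - t * ip x y - (t * ip x y - `|y| ^+ 2) by ring.
by rewrite E exprn_ge0.
Qed.

Lemma ip_CS {R : realType} {V : normedModType R} {ip : V -> V -> R} :
  inner_product ip -> forall x y, `|ip x y| <= `|x| * `|y|.
Proof.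
move=> h x y.
have [->|x0] := eqVneq x 0; first by rewrite (ip0l h) !normr0 mul0r.
have nx : 0 < `|x| by rewrite normr_gt0.
have px : 0 < `|x| ^+ 2 by rewrite exprn_gt0.
have := ip_quad h (ip x y / `|x| ^+ 2) x y.
set a := ip x y; set b := `|x| ^+ 2; set c := `|y| ^+ 2 => H.
have H2 : a ^+ 2 <= b * c.
  have H3 : 0 <= b * ((a / b) ^+ 2 * b - 2 * (a / b) * a + c) by rewrite mulr_ge0 // ltW.
  have e : b * ((a / b) ^+ 2 * b - 2 * (a / b) * a + c) = b * c - a ^+ 2.
    by field; rewrite gt_eqF.
  by move: H3; rewrite e subr_ge0.
rewrite -ler_sqr ?nnegrE ?mulr_ge0 //.
by rewrite exprMn real_normK ?num_real.
Qed.


Lemma usum_ext {R : realType} {V : normedModType R} {I : choiceType}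
  (f g : I -> V) s : (forall i, f i = g i) -> has_usum f s -> has_usum g s.
Proof. by move=> fg; have -> : f = g by apply: funext. Qed.

Lemma usum_unique {R : realType} {V : normedModType R} {I : choiceType}
  {f : I -> V} {s t : V} : has_usum f s -> has_usum f t -> s = t.
Proof.
move=> hs ht; apply/eqP; apply/negPn/negP => st.
have e0 : 0 < `|s - t| / 2 by rewrite divr_gt0 // normr_gt0 subr_eq0.
have [A1 H1] := hs _ e0; have [A2 H2] := ht _ e0.
have := H1 (A1 `|` A2)%fset (fsubsetUl _ _); have := H2 (A1 `|` A2)%fset (fsubsetUr _ _).
set S := \sum_(i <- _) _ => h2 h1.
have : `|s - t| <= `|s - S| + `|t - S|.
  by rewrite (distrC t); apply: le_trans (ler_normD _ _); rewrite addrA subrK.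
lra.
Qed.

Lemma usum_add {R : realType} {V : normedModType R} {I : choiceType}
  {f g : I -> V} {s t : V} : has_usum f s -> has_usum g t ->
  has_usum (fun i => f i + g i) (s + t).
Proof.
move=> hs ht e e0.
have e2 : 0 < e / 2 by rewrite divr_gt0.
have [A1 H1] := hs _ e2; have [A2 H2] := ht _ e2.
exists (A1 `|` A2)%fset => F; rewrite fsubUset => /andP[s1 s2].
have := H1 _ s1; have := H2 _ s2; rewrite big_split /=.
set a := \sum_(i <- _) f i; set b := \sum_(i <- _) g i => h2 h1.
have -> : s + t - (a + b) = (s - a) + (t - b) by rewrite opprD addrACA.
apply: le_lt_trans (ler_normD _ _) _; lra.
Qed.

Lemma usum_map {R : realType} {V W : normedModType R} {I : choiceType}
  (L : V -> W) (K : R) (f : I -> V) s :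
  (forall a b, L (a - b) = L a - L b) -> 0 <= K -> (forall d, `|L d| <= K * `|d|) ->
  has_usum f s -> has_usum (fun i => L (f i)) (L s).
Proof.
move=> Lad K0 LK hs e e0.
have L0 : L 0 = 0 by rewrite -(subrr 0) Lad subrr.
have LD : forall a b, L (a + b) = L a + L b.
  have LN : forall b, L (- b) = - L b by move=> b; rewrite -sub0r Lad L0 sub0r.
  by move=> a b; rewrite -{1}[b]opprK Lad LN opprK.
have LS : forall r : seq I, L (\sum_(i <- r) f i) = \sum_(i <- r) L (f i).
  elim=> [|x r IH]; first by rewrite !big_nil.
  by rewrite !big_cons LD IH.
have eK : 0 < e / (K + 1) by rewrite divr_gt0 // ltr_wpDl.
have [A HA] := hs _ eK; exists A => F AF.
rewrite -LS -Lad; apply: le_lt_trans (LK _) _.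
have := HA _ AF; set d := `|_| => hd.
have d0 : 0 <= d by exact: normr_ge0.
have : K * d <= K * (e / (K + 1)) by rewrite ler_wpM2l // ltW.
have : K * (e / (K + 1)) < e.
  rewrite mulrA ltr_pdivrMr ?ltr_wpDl // mulrDr mulr1 mulrC; lra.
lra.
Qed.

Lemma usum_delta {R : realType} {V : normedModType R} {I : choiceType}
  (f : I -> V) (i0 : I) (c : V) :
  (forall j, f j = if j == i0 then c else 0) -> has_usum f c.
Proof.
move=> hf e e0; exists [fset i0]%fset => F sF.
rewrite -(@big_fset_incl _ _ _ _ [fset i0]%fset) //.
  by rewrite big_seq_fset1 hf eqxx subrr normr0.
by move=> x _; rewrite inE hf => /negbTE ->.
Qed.


Lemma ip_sumr {R : realType} {V : normedModType R} {ip : V -> V -> R} {I : Type}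
  (h : inner_product ip) z (g : I -> V) (r : seq I) :
  ip z (\sum_(i <- r) g i) = \sum_(i <- r) ip z (g i).
Proof.
elim: r => [|x r IH]; first by rewrite !big_nil; case: (h) => S _ _; rewrite S (ip0l h).
by rewrite !big_cons (ipDr h) IH.
Qed.

Lemma ip_suml {R : realType} {V : normedModType R} {ip : V -> V -> R} {I : Type}
  (h : inner_product ip) z (g : I -> V) (r : seq I) :
  ip (\sum_(i <- r) g i) z = \sum_(i <- r) ip (g i) z.
Proof.
case: (h) => S _ _; rewrite S (ip_sumr h); apply: eq_bigr => i _; exact: S.
Qed.

Lemma on_sum_norm {R : realType} {V : normedModType R} {ip : V -> V -> R}
  {I : choiceType} (h : inner_product ip) (u : I -> V) (hu : Defs.orthonormal ip u)
  (a : I -> R) (r : seq I) : uniq r ->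
  `|\sum_(i <- r) a i *: u i| ^+ 2 = \sum_(i <- r) a i ^+ 2.
Proof.
rewrite -(ipNN h); elim: r => [|x r IH]; first by rewrite !big_nil (ip0l h).
rewrite cons_uniq => /andP[xr ur].
rewrite !big_cons (ipDl h) !(ipDr h) -IH // !(ipZl h) !(ipZr h) hu eqxx.
have -> : ip (u x) (\sum_(j <- r) a j *: u j) = 0.
  rewrite (ip_sumr h) big_seq big1 // => j jr.
  by rewrite (ipZr h) hu; case: eqVneq => [xj|]; [rewrite xj jr in xr|rewrite mulr0].
have S : forall p q, ip p q = ip q p by case: h.
rewrite (S _ (u x)).
have -> : ip (u x) (\sum_(j <- r) a j *: u j) = 0.
  rewrite (ip_sumr h) big_seq big1 // => j jr.
  by rewrite (ipZr h) hu; case: eqVneq => [xj|]; [rewrite xj jr in xr|rewrite mulr0].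
by rewrite !mulr0 mulr1 !addr0 add0r expr2.
Qed.

Lemma bessel {R : realType} {V : normedModType R} {ip : V -> V -> R}
  {I : choiceType} (h : inner_product ip) (u : I -> V) (hu : Defs.orthonormal ip u)
  (y : V) (r : seq I) : uniq r ->
  \sum_(i <- r) ip y (u i) ^+ 2 <= `|y| ^+ 2.
Proof.
move=> ur.
set T := \sum_(i <- r) ip y (u i) *: u i.
have H := ipNN h (y - T).
have HT := on_sum_norm h u hu (fun i => ip y (u i)) r ur.
rewrite (ipBl h) !(ipBr h) !(ipNN h) in H.
have E : ip y T = \sum_(i <- r) ip y (u i) ^+ 2.
  by rewrite (ip_sumr h); apply: eq_bigr => i _; rewrite (ipZr h) expr2.
case: (h) => S _ _; rewrite (S T y) E /T HT in H.
have := exprn_ge0 2 (normr_ge0 (y - T)).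
lra.
Qed.


Definition totally' {I : choiceType} : set_system {fset I} :=
  filter_from setT (fun A => [set B | (A `<=` B)%fset]).

Instance totally'_filter {I : choiceType} : ProperFilter (@totally' I).
Proof.
eapply filter_from_proper; last by move=> A _; exists A; rewrite /= fsubset_refl.
apply: filter_fromT_filter; first by exists fset0.
by move=> A B /=; exists (A `|` B)%fset => P /=; rewrite fsubUset => /andP[].
Qed.

Lemma on_tail {R : realType} {V : normedModType R} {ip : V -> V -> R}
  {I : choiceType} (h : inner_product ip) (u : I -> V) (hu : Defs.orthonormal ip u)
  (a : I -> R) (M : R) :
  (forall r : seq I, uniq r -> \sum_(i <- r) a i ^+ 2 <= M) ->
  forall e, 0 < e -> exists F0 : {fset I}, forall G : {fset I}, (F0 `<=` G)%fset ->
    `|\sum_(i <- G) a i *: u i - \sum_(i <- F0) a i *: u i| ^+ 2 <= e.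
Proof.
move=> hM e e0.
pose E := [set \sum_(i <- F) a i ^+ 2 | F in [set: {fset I}]].
have hE : has_sup E.
  split; first by exists (\sum_(i <- fset0) a i ^+ 2); exists fset0%fset.
  by exists M => _ [F _ <-]; apply: hM.
have [_ [F0 _ <-] hv] := sup_adherent e0 hE.
exists F0 => G sFG.
pose b i := if i \in F0 then a i else 0.
pose d i := if i \in F0 then 0 else a i.
have e1 : \sum_(i <- F0) a i *: u i = \sum_(i <- G) b i *: u i.
  rewrite -(@big_fset_incl _ _ _ _ F0 G) //; last first.
    by move=> x _ xF; rewrite /b (negbTE xF) scale0r.
  by rewrite big_seq [RHS]big_seq; apply: eq_bigr => i iF; rewrite /b iF.
have e2 : \sum_(i <- F0) a i ^+ 2 = \sum_(i <- G) b i ^+ 2.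
  rewrite -(@big_fset_incl _ _ _ _ F0 G) //; last first.
    by move=> x _ xF; rewrite /b (negbTE xF) expr2 mul0r.
  by rewrite big_seq [RHS]big_seq; apply: eq_bigr => i iF; rewrite /b iF.
have e3 : \sum_(i <- G) a i *: u i - \sum_(i <- G) b i *: u i = \sum_(i <- G) d i *: u i.
  rewrite -sumrB; apply: eq_bigr => i _; rewrite -scalerBl /b /d.
  case iF: (i \in F0); first by rewrite subrr.
  by rewrite subr0.
have e4 : \sum_(i <- G) a i ^+ 2 = \sum_(i <- G) b i ^+ 2 + \sum_(i <- G) d i ^+ 2.
  rewrite -big_split; apply: eq_bigr => i _; rewrite /b /d.
  case iF: (i \in F0); first by rewrite /= [0 ^+ 2]expr2 mul0r addr0.
  by rewrite /= [0 ^+ 2]expr2 mul0r add0r.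
rewrite e1 e3 (on_sum_norm h u hu) //.
have : \sum_(i <- G) a i ^+ 2 <= sup E by apply: sup_upper_bound => //; exists G.
move: hv; rewrite e2 e4; lra.
Qed.

Lemma on_sum_exists {R : realType} {V : completeNormedModType R} {ip : V -> V -> R}
  {I : choiceType} (h : inner_product ip) (u : I -> V) (hu : Defs.orthonormal ip u)
  (a : I -> R) (M : R) :
  (forall r : seq I, uniq r -> \sum_(i <- r) a i ^+ 2 <= M) ->
  exists x0, has_usum (fun i => a i *: u i) x0.
Proof.
move=> hM.
pose S (F : {fset I}) := \sum_(i <- F) a i *: u i.
have hc : cvg (S @ totally').
  apply/cauchy_cvgP; apply: cauchy_exP => eps eps0.
  have e0 : 0 < eps ^+ 2 / 2 by rewrite divr_gt0 // exprn_gt0.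
  have [F0 HF] := on_tail h u hu a M hM _ e0.
  exists (S F0); exists F0 => // G /= sG.
  rewrite -ball_normE /ball_ /= distrC.
  have := HF G sG; rewrite -/(S G) -/(S F0) => H.
  rewrite -(@ltr_pXn2r _ 2) ?nnegrE //; last exact: ltW.
  apply: le_lt_trans H _.
  rewrite ltr_pdivrMr //; have := exprn_gt0 2 eps0; lra.
exists (lim (S @ totally')) => e e0.
have := (cvgrPdist_lt _ _).1 hc e e0.
by case=> A _ HA; exists A => F AF; apply: HA.
Qed.


Lemma beta_id {R : realType} (al s : R) : 0 < al -> 0 < s ->
  filterF al s / s * (beta_coef al s ^+ 2 + al) = beta_coef al s.
Proof.
move=> a0 s0; rewrite /filterF /beta_coef.
have q0 : 0 < Num.sqrt al by rewrite sqrtr_gt0.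
have hq : Num.sqrt al ^+ 2 = al by rewrite sqr_sqrtr // ltW.
case: ifP => hs.
  have D0 : 0 <= s ^+ 2 / 4 - al.
    have : (2 * Num.sqrt al) ^+ 2 <= s ^+ 2 by rewrite ler_sqr ?nnegrE // ?ltW // mulr_ge0 // ltW.
    rewrite exprMn hq => H; rewrite subr_ge0 ler_pdivlMr //; lra.
  have hD := sqr_sqrtr D0.
  set d := Num.sqrt _ in hD *.
  have -> : (s / 2 + d) ^+ 2 + al = s * (s / 2 + d).
    have -> : (s / 2 + d) ^+ 2 = s ^+ 2 / 4 + s * d + d ^+ 2 by field.
    by rewrite hD; field.
  by field; rewrite gt_eqF.
set q := Num.sqrt al in q0 hq *.
rewrite -hq; field.
by rewrite !gt_eqF.
Qed.

Lemma filter_bound {R : realType} (al s : R) : 0 < al -> 0 < s ->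
  0 <= filterF al s / s <= (2 * Num.sqrt al)^-1.
Proof.
move=> a0 s0; rewrite /filterF.
have q0 : 0 < Num.sqrt al by rewrite sqrtr_gt0.
case: ifP => hs.
  rewrite mul1r invr_ge0 ltW //=.
  by rewrite lef_pV2 ?posrE // mulr_gt0.
have -> : s / (2 * Num.sqrt al) / s = (2 * Num.sqrt al)^-1 by field; rewrite !gt_eqF.
by rewrite lexx andbT invr_ge0 mulr_ge0 // ltW.
Qed.

Lemma filter_le1 {R : realType} (al s : R) : 0 < al -> 0 < s ->
  0 <= filterF al s <= 1.
Proof.
move=> a0 s0; rewrite /filterF.
have q0 : 0 < Num.sqrt al by rewrite sqrtr_gt0.
case: ifP => hs; first by rewrite ler01 lexx.
have h2 : 0 < 2 * Num.sqrt al by rewrite mulr_gt0.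
rewrite divr_ge0 ?ltW //=.
have hs' : s < 2 * Num.sqrt al by rewrite ltNge hs.
by rewrite ltr_pdivrMr // mul1r.
Qed.


Lemma part2 {R : realType} :
  (forall nu : R, 0 < nu ->
    exists gamma c1 c2 c3 : R,
      [/\ 0 < gamma, 0 < c1, 0 < c2, 0 < c3 &
      forall alpha : R, 0 < alpha ->
        [/\ (ereal_sup [set (`|filterF alpha s / s|)%:E | s in [set s : R | (0 < s)%R]]
               <= (c1 * alpha `^ (- gamma))%:E)%E,
            (ereal_sup [set (`|1 - filterF alpha s| * s `^ nu)%:E
                          | s in [set s : R | (0 < s)%R]]
               < (c2 * alpha `^ (gamma * nu))%:E)%E
          & forall s : R, 0 < s -> `|filterF alpha s| <= c3]]).
Proof.
move=> nu nu0.
exists 2^-1, 2^-1, (2 * 2 `^ nu), 1; split => //.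

move=> al a0.
have q0 : 0 < Num.sqrt al by rewrite sqrtr_gt0.
have q2 : 0 < 2 * Num.sqrt al by rewrite mulr_gt0.
split.
- apply/ereal_supP => _ [s /= s0 <-]; rewrite lee_fin.
  rewrite powRN (powR12_sqrt (ltW a0)) -invfM.
  have /andP[b0 b1] := filter_bound al s a0 s0.
  rewrite ger0_norm //; exact: b1.
- have Hb : (ereal_sup [set (`|1 - filterF al s| * s `^ nu)%:E
                          | s in [set s : R | (0 < s)%R]]
               <= (2 `^ nu * al `^ (2^-1 * nu))%:E)%E.
    apply/ereal_supP => _ [s /= s0 <-]; rewrite lee_fin.
    rewrite powRrM (powR12_sqrt (ltW a0)) -powRM // ?sqrtr_ge0.
    rewrite /filterF; case: ifP => hs.
      by rewrite subrr normr0 mul0r powR_ge0.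
    have hs' : s < 2 * Num.sqrt al by rewrite ltNge hs.
    have f0 : 0 <= s / (2 * Num.sqrt al) by rewrite divr_ge0 ?ltW.
    have f1 : s / (2 * Num.sqrt al) <= 1 by rewrite ler_pdivrMr // mul1r ltW.
    have n1 : `|1 - s / (2 * Num.sqrt al)| <= 1 by rewrite ger0_norm; lra.
    have p1 : s `^ nu <= (2 * Num.sqrt al) `^ nu.
      by apply: ge0_ler_powR; rewrite ?nnegrE ?ltW.
    have hp := powR_ge0 s nu.
    rewrite -[X in _ <= X]mul1r; apply: ler_pM => //; exact: normr_ge0.
  apply: (le_lt_trans Hb); rewrite lte_fin -mulrA ltr_pMl //.
    lra.
  by rewrite mulr_gt0 // powR_gt0.
- move=> s s0; have /andP[f0 f1] := filter_le1 al s a0 s0.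
  by rewrite ger0_norm.
Qed.


Lemma usum_ip {R : realType} {V : normedModType R} {ip : V -> V -> R}
  {I : choiceType} (h : inner_product ip) z {f : I -> V} {s : V} :
  has_usum f s -> has_usum (fun i => ip z (f i)) (ip z s).
Proof.
apply: (@usum_map _ _ _ _ (ip z) `|z|).
- by move=> p q; rewrite (ipBr h).
- exact: normr_ge0.
- by move=> d; apply: ip_CS.
Qed.

Lemma usum_opp {R : realType} {V : normedModType R} {I : choiceType}
  {f : I -> V} {s : V} : has_usum f s -> has_usum (fun i => - f i) (- s).
Proof.
apply: (@usum_map _ _ _ _ (fun x => - x) 1).
- by move=> p q; rewrite opprB opprK addrC.
- exact: ler01.
- by move=> d; rewrite normrN mul1r.
Qed.

Lemma usum_scale {R : realType} {I : choiceType}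
  (k : R) {f : I -> R} {s : R} : has_usum f s -> has_usum (fun i => k * f i) (k * s).
Proof.
apply: (@usum_map _ _ _ _ (fun x => k * x) `|k|).
- by move=> p q; rewrite mulrBr.
- exact: normr_ge0.
- by move=> d; rewrite normrM.
Qed.

Lemma usum_zero {R : realType} {V : normedModType R} {I : choiceType} :
  has_usum (fun _ : I => (0 : V)) 0.
Proof. by move=> e e0; exists fset0%fset => F _; rewrite big1 // subrr normr0. Qed.

Lemma norm_add_sq {R : realType} {V : normedModType R} {ip : V -> V -> R}
  (h : inner_product ip) (p q : V) :
  `|p + q| ^+ 2 = `|p| ^+ 2 + 2 * ip p q + `|q| ^+ 2.
Proof.
rewrite -!(ipNN h) (ipDl h) !(ipDr h).
have S : forall x y, ip x y = ip y x by case: h.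
rewrite (S q p); ring.
Qed.


Lemma part1 {R : realType} {X : completeNormedModType R} {Y : normedModType R}
  (ipX : X -> X -> R) (ipY : Y -> Y -> R)
  (hX : inner_product ipX) (hY : inner_product ipY)
  (I : choiceType) (sigma : I -> R) (u : I -> X) (v : I -> Y)
  (sig0 : forall i, 0 < sigma i)
  (hu : Defs.orthonormal ipX u) (hv : Defs.orthonormal ipY v)
  (alpha : R) (a0 : 0 < alpha) (B : X -> Y)
  (hB : forall x, has_usum (fun i => (beta_coef alpha (sigma i) * ipX (u i) x) *: v i)
                          (B x))
  (y : Y) : exists x0 : X,
        has_usum (fun i => (filterF alpha (sigma i) / sigma i * ipY y (v i)) *: u i) x0
        /\ is_tikhonov_solution B alpha y x0.
Proof.
pose c i := filterF alpha (sigma i) / sigma i.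
pose b i := beta_coef alpha (sigma i).
pose a i := c i * ipY y (v i).
have SX : forall p q, ipX p q = ipX q p by case: hX.
have SY : forall p q, ipY p q = ipY q p by case: hY.
pose K := (2 * Num.sqrt alpha)^-1.
have hM : forall r : seq I, uniq r -> \sum_(i <- r) a i ^+ 2 <= K ^+ 2 * `|y| ^+ 2.
  move=> r ur.
  apply: (@le_trans _ _ (\sum_(i <- r) K ^+ 2 * ipY y (v i) ^+ 2)).
    apply: ler_sum => i _; rewrite /a exprMn ler_wpM2r ?sqr_ge0 //.
    have /andP[c0 c1] := filter_bound alpha (sigma i) a0 (sig0 i).
    by rewrite ler_sqr ?nnegrE // (le_trans c0 c1).
  by rewrite -mulr_sumr ler_wpM2l ?sqr_ge0 // (bessel hY v hv).
have [x0 hx0] := on_sum_exists hX u hu a _ hM.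
exists x0; split; first exact: hx0.
have F1 : forall i, ipX (u i) x0 = a i.
  move=> i; apply: (usum_unique (usum_ip hX (u i) hx0)).
  apply: (usum_delta _ i) => j.
  rewrite (ipZr hX) hu eq_sym; case: eqP => [->|_]; rewrite ?mulr1 ?mulr0 //.
have F2 : forall z w, B z - B w = B (z - w).
  move=> z w; apply: (usum_unique (usum_add (hB z) (usum_opp (hB w)))).
  apply: (usum_ext _ _ _ _ (hB (z - w))) => i.
  by rewrite (ipBr hX) mulrBr scalerBl.
have F3 : forall i, ipY (B x0) (v i) = b i * a i.
  move=> i; rewrite SY; apply: (usum_unique (usum_ip hY (v i) (hB x0))).
  apply: (usum_delta _ i) => j.
  rewrite (ipZr hY) hv eq_sym; case: ifP => [/eqP ->|_]; rewrite ?mulr1 ?mulr0 //.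
  by rewrite F1.
have Key : forall w, ipY (B x0 - y) (B w) + alpha * ipX x0 w = 0.
  move=> w.
  have T1 := usum_ip hY (B x0) (hB w).
  have T2 := usum_opp (usum_ip hY y (hB w)).
  have T3 := usum_scale alpha (usum_ip hX w hx0).
  have T := usum_add (usum_add T1 T2) T3.
  rewrite (ipBl hY) SX; apply: (usum_unique T).
  apply: (usum_ext _ _ _ _ usum_zero) => i /=.
  rewrite !(ipZr hY) !(ipZr hX) F3 (SX w).
  have := beta_id alpha (sigma i) a0 (sig0 i).
  rewrite -/(c i) -/(b i) /a => E.
  transitivity (ipX (u i) w * ipY y (v i) * (c i * (b i ^+ 2 + alpha) - b i)).
    by rewrite E subrr mulr0.
  ring.
have Tik : forall z, tikhonov B alpha y z =
    tikhonov B alpha y x0 + (2^-1 * `|B (z - x0)| ^+ 2 + alpha / 2 * `|z - x0| ^+ 2).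
  move=> z; rewrite /tikhonov; set w := z - x0.
  have e1 : B z - y = (B x0 - y) + B w.
    have : B x0 - y + B w = B z - y by rewrite /w -F2 addrC addrA subrK.
    by move=> ->.
  have e2 : z = x0 + w by rewrite /w addrC subrK.
  rewrite e1 {1}e2 (norm_add_sq hY) (norm_add_sq hX).
  have K' : ipY (B x0 - y) (B w) = - (alpha * ipX x0 w).
    by apply/eqP; rewrite -addr_eq0 Key.
  rewrite K'; ring.
split.
  move=> z; rewrite (Tik z) lerDl; apply: addr_ge0; apply: mulr_ge0; rewrite ?sqr_ge0 //.
  by rewrite divr_ge0 // ltW.
move=> z hz.
have := hz x0; rewrite (Tik z) -{2}[tikhonov B alpha y x0]addr0 lerD2l => H.
have H2 : 0 <= 2^-1 * `|B (z - x0)| ^+ 2 by rewrite mulr_ge0 ?sqr_ge0 // invr_ge0.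
have H3 : `|z - x0| ^+ 2 <= 0.
  have a2 : 0 < alpha / 2 by rewrite divr_gt0.
  rewrite -(pmulr_rle0 _ a2); lra.
apply/eqP; rewrite -subr_eq0 -normr_eq0 -(sqrf_eq0) eq_le H3 sqr_ge0 //.
Qed.

Theorem theorem2 (R : realType)
    (X Y : completeNormedModType R)
    (ipX : X -> X -> R) (ipY : Y -> Y -> R)
    (hX : inner_product ipX) (hY : inner_product ipY)
    (A : {linear X -> Y}) (A_cont : continuous A) (A_cpt : compact_op A)
    (I : choiceType) (sigma : I -> R) (u : I -> X) (v : I -> Y)
    (hsys : singular_system ipX ipY A sigma u v) :
  (* K_alpha(y) = x(B_alpha, y) = sum_i F_alpha(sigma_i)/sigma_i <y,v_i> u_i *)
  (forall alpha : R, 0 < alpha ->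
    forall B : X -> Y,
      (forall x, has_usum (fun i => (beta_coef alpha (sigma i) * ipX (u i) x) *: v i)
                          (B x)) ->
      forall y : Y, exists x0 : X,
        has_usum (fun i => (filterF alpha (sigma i) / sigma i * ipY y (v i)) *: u i) x0
        /\ is_tikhonov_solution B alpha y x0)
  /\
  (* order optimality of the filter F_alpha *)
  (forall nu : R, 0 < nu ->
    exists gamma c1 c2 c3 : R,
      [/\ 0 < gamma, 0 < c1, 0 < c2, 0 < c3 &
      forall alpha : R, 0 < alpha ->
        [/\ (ereal_sup [set (`|filterF alpha s / s|)%:E | s in [set s : R | (0 < s)%R]]
               <= (c1 * alpha `^ (- gamma))%:E)%E,
            (ereal_sup [set (`|1 - filterF alpha s| * s `^ nu)%:E
                          | s in [set s : R | (0 < s)%R]]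
               < (c2 * alpha `^ (gamma * nu))%:E)%E
          & forall s : R, 0 < s -> `|filterF alpha s| <= c3]]).
Proof.
split.
  move=> alpha a0 B hB y.
  case: hsys => sig0 [hu hv] _ _ _.
  exact: (part1 ipX ipY hX hY I sigma u v sig0 hu hv alpha a0 B hB y).
exact: part2.
Qed.
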